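(* Let $A=\mathbb{C}[x_1,x_2,\dots]$ and let $d:A\to A$ be the derivation with $dx_1=0$ and $dx_i=x_{i-1}$ for $i>1$. For any integers $n\ge\ell\ge1$, any $i\ge0$, and any $\beta=(\beta_1,\dots,\beta_\ell)\in B^{(\ell)}_n(i)$, $$d\,g_{(\beta_1,\dots,\beta_\ell)}(\vec x)=\begin{cases}0,& i=0,\\ g_{(\beta_1-1,\beta_2,\dots,\beta_\ell)}(\vec x),& i>0.\end{cases}$$
   Context: For $n\ge\ell\ge1$, $B^{(\ell)}_n=\{\beta=(\beta_1,\dots,\beta_\ell)\in\mathbb{Z}^\ell:\beta_1,\dots,\beta_{\ell-1}\ge0,\ \beta_\ell\ge1,\ \beta_1+2\beta_2+\cdots+\ell\beta_\ell=n\}$. For $i\ge0$ and $n\ge\ell>1$, $B^{(\ell)}_n(i)=\{\beta\in B^{(\ell)}_n:\beta_1=i\}$; for $\ell=1$, $B^{(1)}_n(i)=\{(i+1)\}$ if $n=i+1$ and $\emptyset$ otherwise. For $\vec k=(k_1,\dots,k_\ell)$, $e_j(\vec k)$ is the $j$-th elementary symmetric polynomial and $e^\beta(\vec k)=e_1(\vec k)^{\beta_1}\cdots e_\ell(\vec k)^{\beta_\ell}$. For $\beta\in B^{(\ell)}_n$ the polynomial $g_\beta(\vec x)\in A$ is defined by $$\sum_{\substack{i_1,\dots,i_\ell\ge1\\ i_1+\cdots+i_\ell=n}} k_1^{i_1}\cdots k_\ell^{i_\ell}x_{i_1}\cdots x_{i_\ell}=\sum_{\beta\in B^{(\ell)}_n}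 e^\beta(k_1,\dots,k_\ell)\,g_\beta(\vec x)$$ (in particular $g_{(m)}(\vec x)=x_m$ for $\ell=1$). *)

(* Defs.v *)
From HB Require Import structures.
From mathcomp Require Import all_boot all_order all_algebra all_field.
From mathcomp Require Import mpoly.
Set Implicit Arguments. Unset Strict Implicit. Unset Printing Implicit Defensive.
Import GRing.Theory.
Local Open Scope ring_scope.

(* A_m = C[x_1, ..., x_m]; the variable x_j (j >= 1) is 'X_(j-1).
   xv m j = x_j for 1 <= j <= m, and 0 otherwise (only used for j <= m). *)
Definition xv (m : nat) (j : nat) : {mpoly algC[m]} :=
  match j with
  | 0 => 0
  | j'.+1 => match insub j' with Some i => 'X_i | None => 0 end
  end.

(* beta (as a seq of length l, beta_1 = nth 0 beta 0) lies in B^(l)_n *)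
Definition inB (n l : nat) (beta : seq nat) : bool :=
  [&& size beta == l, 0 < l, 0 < nth 0 beta l.-1 &
      \sum_(j < l) j.+1 * nth 0 beta j == n]%N.

(* B^(l)_n(i), with the paper's special convention for l = 1 *)
Definition inBi (n l i : nat) (beta : seq nat) : bool :=
  if (1 < l)%N then inB n l beta && (nth 0 beta 0 == i)
  else (l == 1%N) && (beta == [:: i.+1]) && (n == i.+1).

Definition decr_head (beta : seq nat) : seq nat :=
  (nth 0 beta 0).-1 :: behead beta.

(* e^beta(k_1,...,k_l) in A[k_1,...,k_l], with k_j = 'X_(j-1) *)
Definition ebeta (A : comRingType) (l : nat) (beta : seq nat) : {mpoly A[l]} :=
  \prod_(j < l) mesym l A j.+1 ^+ nth 0 beta j.

Definition genS (m n l : nat) : {mpoly {mpoly algC[m]}[l]} :=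
  \sum_(t : l.-tuple 'I_n.+1 |
          [&& (\sum_(j < l) val (tnth t j) == n)%N & all (fun i : 'I_n.+1 => 0 < val i)%N t])
     \prod_(j < l) ('X_j ^+ val (tnth t j) * (xv m (val (tnth t j)))%:MP).

(* the defining identity of the polynomials g_beta, for given n, l *)
Definition g_identity (m : nat) (g : seq nat -> {mpoly algC[m]}) (n l : nat) : Prop :=
  genS m n l =
  \sum_(t : l.-tuple 'I_n.+1 | inB n l [seq val i | i <- t])
     ebeta _ l [seq val i | i <- t] * (g [seq val i | i <- t])%:MP.

(* Main.v *)
Require Import Defs.
From HB Require Import structures.
From mathcomp Require Import all_boot all_order all_algebra all_field.
From mathcomp Require Import mpoly.
From mathcomp Require Import zify.
Set Implicit Arguments. Unset Strict Implicit. Unset Printing Implicit Defensive.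
Import GRing.Theory.
Local Open Scope ring_scope.





Lemma d0_lem (m : nat) (d : {mpoly algC[m]} -> {mpoly algC[m]}) :
  (forall p q, d (p + q) = d p + d q) -> d 0 = 0.
Proof.
move=> hD; have h := hD 0 0; rewrite addr0 in h.
by apply: (addrI (d 0)); rewrite addr0 -h.
Qed.

Lemma d_prod (m : nat) (d : {mpoly algC[m]} -> {mpoly algC[m]}) :
  (forall p q, d (p * q) = p * d q + d p * q) ->
  (forall c : algC, d c%:MP = 0) ->
  forall (F : nat -> {mpoly algC[m]}) k,
  d (\prod_(0 <= j < k) F j) =
  \sum_(0 <= p < k) d (F p) * \prod_(0 <= j < k | j != p) F j.
Proof.
move=> hM hC F; elim=> [|k IH].
  by rewrite !big_geq // -mpolyC1 hC.
rewrite big_nat_recr //= hM IH big_nat_recr //= mulr_suml addrC; congr (_ + _).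
  rewrite mulrC; congr (_ * _).
  rewrite [RHS]big_mkcond big_nat_recr //= eqxx mulr1.
  by apply: eq_big_nat => j /andP[_ hj]; rewrite (ltn_eqF hj).
apply: eq_big_nat => p /andP[_ hp].
rewrite -mulrA; congr (_ * _).
rewrite [RHS]big_mkcond big_nat_recr //= -big_mkcond /=.
by rewrite (gtn_eqF hp).
Qed.



Definition Dm (m l : nat) (d : {mpoly algC[m]} -> {mpoly algC[m]})
  (P : {mpoly {mpoly algC[m]}[l]}) : {mpoly {mpoly algC[m]}[l]} :=
  \sum_(mu <- msupp P) d P@_mu *: 'X_[mu].

Lemma DmE (m l : nat) (d : {mpoly algC[m]} -> {mpoly algC[m]}) :
  d 0 = 0 -> forall (P : {mpoly {mpoly algC[m]}[l]}) mu, (Dm d P)@_mu = d (P@_mu).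
Proof.
move=> d0 P mu; rewrite /Dm raddf_sum /=.
under eq_bigr do rewrite mcoeffZ mcoeffX.
case: (boolP (mu \in msupp P)) => hmu.
  rewrite (bigD1_seq mu) //= ?msupp_uniq // eqxx mulr1 big1 ?addr0 //.
  by move=> nu /negbTE hnu; rewrite hnu mulr0.
rewrite big1_seq; last first.
  move=> nu /= hnu; case: eqP => [e|]; last by rewrite mulr0.
  by rewrite -e hnu in hmu.
by move: hmu; rewrite -mcoeff_eq0 => /eqP ->; rewrite d0.
Qed.

Lemma DmD (m l : nat) (d : {mpoly algC[m]} -> {mpoly algC[m]}) :
  (forall p q, d (p + q) = d p + d q) -> d 0 = 0 ->
  forall (P Q : {mpoly {mpoly algC[m]}[l]}), Dm d (P + Q) = Dm d P + Dm d Q.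
Proof.
by move=> hD d0 P Q; apply/mpolyP => mu; rewrite mcoeffD !DmE // mcoeffD hD.
Qed.

Lemma Dm_sum (m l : nat) (d : {mpoly algC[m]} -> {mpoly algC[m]}) :
  (forall p q, d (p + q) = d p + d q) -> d 0 = 0 ->
  forall (I : Type) (r : seq I) (Pr : pred I) (F : I -> {mpoly {mpoly algC[m]}[l]}),
  Dm d (\sum_(i <- r | Pr i) F i) = \sum_(i <- r | Pr i) Dm d (F i).
Proof.
move=> hD d0 I r Pr F; apply: (big_morph _ (DmD hD d0)).
by apply/mpolyP => mu; rewrite DmE // !mcoeff0.
Qed.

Lemma Dm_Cmap (m l : nat) (d : {mpoly algC[m]} -> {mpoly algC[m]}) :
  (forall p q, d (p * q) = p * d q + d p * q) ->
  (forall c : algC, d c%:MP = 0) -> d 0 = 0 ->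
  forall (c : {mpoly algC[m]}) (Q : {mpoly algC[l]}),
  Dm d (c%:MP * map_mpoly (@mpolyC m algC) Q) = (d c)%:MP * map_mpoly (@mpolyC m algC) Q.
Proof.
move=> hM hC d0 c Q; apply/mpolyP => mu.
by rewrite DmE // !mcoeffCM mcoeff_map_mpoly hM hC mulr0 add0r.
Qed.

Definition Sl (K : comRingType) (l : nat) : l.-tuple {mpoly K[l]} :=
  [tuple mesym l K i.+1 | i < l].

Definition mnm_of (l : nat) (s : seq nat) : 'X_{1..l} := [multinom nth 0 s i | i < l].

Lemma ebeta_comp (K : comRingType) (l : nat) (s : seq nat) :
  ebeta K l s = 'X_[mnm_of l s] \mPo Sl K l.
Proof.
rewrite comp_mpolyX /ebeta; apply: eq_bigr => i _.
by rewrite tnth_mktuple mnmE.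
Qed.

Lemma map_mesym (m l k : nat) :
  map_mpoly (@mpolyC m algC) (mesym l algC k) = mesym l _ k.
Proof.
rewrite !mesymE rmorph_sum; apply: eq_bigr => h _; exact: map_mpolyX.
Qed.

Lemma Xcomp_map (m l : nat) (mu : 'X_{1..l}) :
  'X_[mu] \mPo Sl {mpoly algC[m]} l = map_mpoly (@mpolyC m algC) ('X_[mu] \mPo Sl algC l).
Proof.
rewrite !comp_mpolyX rmorph_prod; apply: eq_bigr => i _.
rewrite rmorphXn !tnth_mktuple; congr (_ ^+ _); exact/esym/map_mesym.
Qed.

Definition Phi (m n l : nat) (c : seq nat -> {mpoly algC[m]}) : {mpoly {mpoly algC[m]}[l]} :=
  \sum_(t : l.-tuple 'I_n.+1 | inB n l [seq val i | i <- t])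
     c [seq val i | i <- t] *: 'X_[mnm_of l [seq val i | i <- t]].

Lemma Phi_comp (m n l : nat) (c : seq nat -> {mpoly algC[m]}) :
  Phi n l c \mPo Sl _ l =
  \sum_(t : l.-tuple 'I_n.+1 | inB n l [seq val i | i <- t])
     ebeta _ l [seq val i | i <- t] * (c [seq val i | i <- t])%:MP.
Proof.
rewrite /Phi raddf_sum; apply: eq_bigr => t _.
rewrite /= comp_mpolyZ -mul_mpolyC mulrC ebeta_comp.
by [].
Qed.

Lemma Dm_Phi (m n l : nat) (d : {mpoly algC[m]} -> {mpoly algC[m]}) :
  (forall p q, d (p + q) = d p + d q) ->
  (forall p q, d (p * q) = p * d q + d p * q) ->
  (forall c : algC, d c%:MP = 0) -> d 0 = 0 ->
  forall (c : seq nat -> {mpoly algC[m]}),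
  Dm d (Phi n l c \mPo Sl _ l) = Phi n l (fun s => d (c s)) \mPo Sl _ l.
Proof.
move=> hD hM hC d0 c; rewrite /Phi !raddf_sum Dm_sum //; apply: eq_bigr => t _.
rewrite /= !comp_mpolyZ -!mul_mpolyC Xcomp_map Dm_Cmap //.
Qed.



Lemma mnm_of_tuple (l n : nat) (t : l.-tuple 'I_n.+1) (j : 'I_l) :
  mnm_of l [seq val i | i <- t] j = val (tnth t j).
Proof. by rewrite mnmE (nth_map ord0) ?size_tuple // -tnth_nth. Qed.

Lemma mnm_of_inj (l n : nat) (t1 t2 : l.-tuple 'I_n.+1) :
  mnm_of l [seq val i | i <- t1] = mnm_of l [seq val i | i <- t2] -> t1 = t2.
Proof.
move=> e; apply: eq_from_tnth => j; apply/val_inj.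
by rewrite -!mnm_of_tuple e.
Qed.

Lemma mnm_le_mdeg (l : nat) (mu : 'X_{1..l}) (j : 'I_l) : (mu j <= mdeg mu)%N.
Proof. by rewrite mdegE (bigD1 j) //= leq_addr. Qed.

Lemma coeff_sum_X (K : ringType) (l : nat) (T : finType) (P : pred T)
   (c : T -> K) (f : T -> 'X_{1..l}) mu :
  (\sum_(t | P t) c t *: 'X_[f t])@_mu = \sum_(t | P t && (f t == mu)) c t.
Proof.
rewrite raddf_sum /= big_mkcondr /=; apply: eq_bigr => t _.
by rewrite mcoeffZ mcoeffX; case: eqP; rewrite ?mulr1 ?mulr0.
Qed.

Lemma genS_coeff (m n l : nat) (mu : 'X_{1..l}) :
  (genS m n l)@_mu = if mdeg mu == n then \prod_(j < l) xv m (mu j) else 0.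
Proof.
rewrite /genS.
have E : forall t : l.-tuple 'I_n.+1,
   \prod_(j < l) ('X_j ^+ val (tnth t j) * (xv m (val (tnth t j)))%:MP) =
   (\prod_(j < l) xv m (val (tnth t j))) *: 'X_[mnm_of l [seq val i | i <- t]].
  move=> t; rewrite big_split /= mulrC -mul_mpolyC rmorph_prod; congr (_ * _).
  by rewrite mpolyXE_id; apply: eq_bigr => j _; rewrite mnm_of_tuple.
under eq_bigr => t _ do rewrite E.
rewrite coeff_sum_X.
set P := (fun t : l.-tuple 'I_n.+1 => _).
case: (boolP ((mdeg mu == n) && [forall j, (0 < mu j)%N])) => [/andP[/eqP hdeg /forallP hpos]|hn].
  pose t0 : l.-tuple 'I_n.+1 := [tuple inord (mu j) | j < l].
  have ht0 : mnm_of l [seq val i | i <- t0] = mu.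
    apply/mnmP => j; rewrite mnm_of_tuple tnth_mktuple /= inordK //.
    by rewrite ltnS -hdeg mnm_le_mdeg.
  rewrite hdeg eqxx (big_pred1 t0); last first.
    move=> t; rewrite /P; apply/idP/eqP => [/andP[_ /eqP e]|->].
      by apply: mnm_of_inj; rewrite e ht0.
    rewrite ht0 eqxx andbT; apply/andP; split.
      apply/eqP; rewrite -[RHS]hdeg mdegE; apply/eq_bigr => j _.
      by rewrite -mnm_of_tuple ht0.
    by apply/all_tnthP => j; rewrite -mnm_of_tuple ht0.
  by apply: eq_bigr => j _; rewrite -mnm_of_tuple ht0.
rewrite big_pred0; last first.
  move=> t; rewrite /P; apply/negbTE; apply: contra hn => /andP[/andP[/eqP hs /all_tnthP hp] /eqP e].
  rewrite -e; apply/andP; split.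
    rewrite mdegE; apply/eqP; rewrite -[RHS]hs; apply/eq_bigr => j _.
    by rewrite mnm_of_tuple.
  by apply/forallP => j; rewrite mnm_of_tuple; exact: hp.
case: eqP => // hdeg; move: hn; rewrite hdeg eqxx /= negb_forall => /existsP[j].
by rewrite lt0n negbK => /eqP hj; rewrite (bigD1 j) //= hj mul0r.
Qed.



Lemma coeff_expand (K : ringType) (l : nat) (Q : {mpoly K[l]}) (f : 'X_{1..l} -> 'X_{1..l}) mu :
  (\sum_(nu <- msupp Q) Q@_nu *: 'X_[f nu])@_mu = \sum_(nu <- msupp Q) Q@_nu * (f nu == mu)%:R.
Proof. by rewrite raddf_sum /=; apply: eq_bigr => nu _; rewrite mcoeffZ mcoeffX. Qed.

Lemma coeffXM (K : ringType) (l : nat) (p : 'I_l) (Q : {mpoly K[l]}) (mu : 'X_{1..l}) :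
  ('X_p * Q)@_mu = if (0 < mu p)%N then Q@_(mu - U_(p))%MM else 0.
Proof.
have E : 'X_p * Q = \sum_(nu <- msupp Q) Q@_nu *: 'X_[(U_(p) + nu)%MM].
  rewrite {1}(mpolyE Q) mulr_sumr; apply: eq_bigr => nu _.
  by rewrite -!mul_mpolyC mulrA -(commr_mpolyX U_(p) (Q@_nu)%:MP) -mulrA mpolyXD.
rewrite E coeff_expand.
case: ifP => hp.
  have -> : Q@_(mu - U_(p))%MM = \sum_(nu <- msupp Q) Q@_nu * (nu == (mu - U_(p))%MM)%:R.
    by rewrite {1}(mpolyE Q) raddf_sum /=; apply: eq_bigr => nu _; rewrite mcoeffZ mcoeffX.
  apply: eq_bigr => nu _.
  suff -> : ((U_(p) + nu)%MM == mu) = (nu == (mu - U_(p))%MM) by [].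
  apply/idP/idP => /eqP e; apply/eqP/mnmP => j; move/mnmP: e => /(_ j);
    rewrite !mnmDE !mnmBE mnm1E; case: (p =P j) => [pj|npj] /=; try (rewrite -pj); lia.
rewrite big1_seq // => nu _; case: eqP; rewrite ?mulr0 // => /mnmP /(_ p).
by rewrite mnmDE mnm1E eqxx; move: hp => /negbT; rewrite -leqNgt; lia.
Qed.

Lemma mdeg_subU (l : nat) (p : 'I_l) (mu : 'X_{1..l}) :
  (0 < mu p)%N -> mdeg mu = (mdeg (mu - U_(p))%MM).+1.
Proof.
move=> hp; have -> : mu = ((mu - U_(p)) + U_(p))%MM.
  apply/mnmP => j; rewrite mnmDE mnmBE mnm1E; case: (p =P j) => [<-|_]; rewrite ?eqxx /=; lia.
rewrite mdegD mdeg1 addn1; congr (mdeg _).+1.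
apply/mnmP => j; rewrite !mnmBE !mnmDE addnK; exact/esym/mnmBE.
Qed.

Lemma Dm_genS (m n l : nat) (d : {mpoly algC[m]} -> {mpoly algC[m]}) :
  (forall p q, d (p + q) = d p + d q) ->
  (forall p q, d (p * q) = p * d q + d p * q) ->
  (forall c : algC, d c%:MP = 0) ->
  (forall j : nat, (0 < j <= m)%N -> d (xv m j) = xv m j.-1) ->
  (0 < n)%N -> (n <= m)%N ->
  Dm d (genS m n l) = mesym l _ 1 * genS m n.-1 l.
Proof.
move=> hD hM hC hX n0 nm.
have d0 := d0_lem hD.
have dx : forall j, (j <= m)%N -> d (xv m j) = xv m j.-1.
  by case=> [|j] hj; [exact: d0 | apply: hX].
apply/mpolyP => mu; rewrite DmE // genS_coeff mesym1E mulr_suml raddf_sum /=.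
transitivity (\sum_(p < l) (if (0 < mu p)%N then
   (if mdeg (mu - U_(p))%MM == n.-1 then \prod_(j < l) xv m ((mu - U_(p))%MM j) else 0) else 0)); last first.
  apply: eq_bigr => p _; apply/esym; rewrite (coeffXM p); case: ifP => // _.
  exact: genS_coeff.
case: (eqVneq (mdeg mu) n) => hdeg; last first.
  rewrite d0; apply/esym/big1 => p _; case: ifP => // hp.
  rewrite ifF //; apply/negbTE; apply: contra hdeg => /eqP e.
  by rewrite (mdeg_subU hp) e; lia.
have -> : \prod_(j < l) xv m (mu j) = \prod_(0 <= j < l) xv m (nth 0%N mu j).
  by rewrite big_mkord; apply: eq_bigr => j _; rewrite (mnm_nth 0%N).
rewrite d_prod // big_mkord; apply: eq_bigr => p _.
rewrite big_mkord -(mnm_nth 0%N).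
have hpm : (mu p <= m)%N by apply: leq_trans (mnm_le_mdeg mu p) _; rewrite hdeg.
case: (posnP (mu p)) => hp.
  by rewrite hp d0 mul0r.
rewrite (mdeg_subU hp) in hdeg; rewrite -hdeg /= eqxx dx // [RHS](bigD1 p) //=.
rewrite mnmBE mnm1E eqxx subn1; congr (_ * _); apply: eq_bigr => j hj.
rewrite mnmBE mnm1E; case: eqP => [e|_]; first by move: hj; rewrite e eqxx.
by rewrite subn0 (mnm_nth 0%N).
Qed.



Lemma inB_size n l s : inB n l s -> size s = l.
Proof. by case/and4P => /eqP. Qed.

Lemma inB_le n l s j : inB n l s -> (nth 0 s j <= n)%N.
Proof.
case/and4P => /eqP hs _ _ /eqP hw.
case: (ltnP j l) => hj; last by rewrite nth_default // hs.
rewrite -hw (bigD1 (Ordinal hj)) //= (leq_trans _ (leq_addr _ _)) //.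
by rewrite leq_pmull.
Qed.

Lemma tuple_of_seq (l N : nat) (s : seq nat) :
  size s = l -> (forall j, nth 0 s j <= N)%N ->
  exists t : l.-tuple 'I_N.+1, [seq val i | i <- t] = s.
Proof.
move=> hs hle.
have hsz : size [seq (inord x : 'I_N.+1) | x <- s] == l by rewrite size_map hs.
exists (Tuple hsz) => /=; rewrite -map_comp; apply: (@eq_from_nth _ 0%N).
  by rewrite size_map.
move=> j; rewrite size_map => hj; rewrite (nth_map 0%N) //= inordK //.
by rewrite ltnS hle.
Qed.

Lemma Phi_coeff (m n l : nat) (c : seq nat -> {mpoly algC[m]}) (t0 : l.-tuple 'I_n.+1) :
  inB n l [seq val i | i <- t0] ->
  (Phi n l c)@_(mnm_of l [seq val i | i <- t0]) = c [seq val i | i <- t0].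
Proof.
move=> h0; rewrite /Phi coeff_sum_X (big_pred1 t0) // => t.
apply/idP/eqP => [/andP[_ /eqP e]|->]; first exact: mnm_of_inj.
by rewrite h0 eqxx.
Qed.

Lemma genS_zero (m n l : nat) : (n < l)%N -> genS m n l = 0.
Proof.
move=> hnl; apply/mpolyP => mu; rewrite genS_coeff mcoeff0.
case: eqP => // hdeg.
have [j hj] : exists j, mu j == 0%N.
  apply/existsP; apply: contraLR hnl; rewrite negb_exists => /forallP hall.
  rewrite -leqNgt -hdeg mdegE -{1}(card_ord l) -sum1_card.
  by apply: leq_sum => j _; rewrite lt0n hall.
by rewrite (bigD1 j) //= (eqP hj) mul0r.
Qed.

Lemma nthR0 (s : seq nat) : nth 0 s 0 = nth 0%N s 0%N.
Proof. by []. Qed.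

Lemma decr_props (n l : nat) (b : seq nat) :
  (1 < l)%N -> inB n l b -> (0 < nth 0 b 0)%N ->
  (l <= n.-1)%N /\ inB n.-1 l (decr_head b).
Proof.
case: l => [//|l1] hl hB hb0.
have hs := inB_size hB.
case/and4P: hB => _ _ hlast /eqP hw.
rewrite big_ord_recl /= in hw.
have hbump : forall i : 'I_l1, bump 0 i = i.+1 by move=> i; rewrite /bump add1n.
have hl1 : (l1.-1 < l1)%N by lia.
set X := (\sum_(i < l1) _)%N in hw.
have hge : (l1.+1 * nth 0 b l1 <= X)%N.
  rewrite /X (bigD1 (Ordinal hl1)) //= (leq_trans _ (leq_addr _ _)) //.
  by rewrite /bump add1n prednK //; lia.
have hlast' : (0 < nth 0 b l1)%N by [].
split.
  have : (l1.+1 <= l1.+1 * nth 0 b l1)%N by rewrite leq_pmulr.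
  lia.
apply/and4P; split => //.
- by rewrite /decr_head /= size_behead hs.
- have hl0 : (0 < l1)%N by lia.
  by rewrite /decr_head /= -(prednK hl0) /= nth_behead prednK.
- rewrite big_ord_recl /=; apply/eqP.
  have -> : (\sum_(i < l1) (bump 0 i).+1 * nth 0 (decr_head b) (bump 0 i))%N = X.
    by apply: eq_bigr => i _; rewrite hbump /decr_head /= nth_behead.
  rewrite /decr_head /= nthR0; lia.
Qed.

Lemma mnm_decr (l : nat) (b : seq nat) (p0 : 'I_l) :
  nat_of_ord p0 = 0%N -> (mnm_of l b - U_(p0))%MM = mnm_of l (decr_head b).
Proof.
move=> hp0; apply/mnmP => j; rewrite mnmBE mnm1E !mnmE /decr_head.
case: (eqVneq p0 j) => [<-|hne]; first by rewrite hp0 /= subn1.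
case: j hne => [[|j] hj] hne /=.
  by exfalso; move: hne; apply/negP/negPn/eqP/val_inj; rewrite /= hp0.
by rewrite subn0 nth_behead.
Qed.



Lemma genS_Phi (m n l : nat) (g : seq nat -> {mpoly algC[m]}) :
  g_identity g n l -> genS m n l = Phi n l g \mPo Sl _ l.
Proof. by rewrite /g_identity Phi_comp. Qed.

Lemma g_single (m : nat) (g : seq nat -> {mpoly algC[m]}) :
  (forall n l : nat, (1 <= l <= n)%N -> (n <= m)%N -> g_identity g n l) ->
  forall k, (1 <= k <= m)%N -> g [:: k] = xv m k.
Proof.
move=> hid k /andP[k1 km].
have := genS_Phi (hid k 1%N _ km); rewrite k1 => /(_ isT).
have -> : Sl {mpoly algC[m]} 1 = [tuple 'X_i | i < 1].
  apply: eq_from_tnth => i; rewrite !tnth_mktuple ord1.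
  by rewrite mesymnnE big_ord1.
rewrite comp_mpoly_id => /(congr1 (mcoeff (mnm_of 1 [:: k]))).
have [t0 ht0] : exists t0 : 1.-tuple 'I_k.+1, [seq val i | i <- t0] = [:: k].
  by apply: tuple_of_seq => // -[|j] //=; rewrite nth_nil.
have hB : inB k 1 [:: k].
  apply/and4P; split => //=; first by rewrite big_ord1 mul1n.
rewrite -{2}ht0 Phi_coeff ?ht0 // genS_coeff.
have -> : mdeg (mnm_of 1 [:: k]) = k by rewrite mdegE big_ord1 mnmE.
by rewrite eqxx big_ord1 mnmE.
Qed.

Unset Implicit Arguments.

Theorem lemma3p2 (m : nat) (d : {mpoly algC[m]} -> {mpoly algC[m]})
  (g : seq nat -> {mpoly algC[m]}) :
  (forall p q, d (p + q) = d p + d q) ->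
  (forall p q, d (p * q) = p * d q + d p * q) ->
  (forall c : algC, d c%:MP = 0) ->
  (forall j : nat, (0 < j <= m)%N -> d (xv m j) = xv m j.-1) ->
  (forall n l : nat, (1 <= l <= n)%N -> (n <= m)%N -> g_identity g n l) ->
  forall (n l i : nat) (beta : seq nat),
    (1 <= l <= n)%N -> (n <= m)%N -> inBi n l i beta ->
    d (g beta) = if i == 0%N then 0 else g (decr_head beta).
Proof.
move=> hD hM hC hX hid n l i beta /andP[hl1 hln] hnm hB.
have d0 := d0_lem hD.
rewrite /inBi in hB; case: ifP hB => hl; last first.
  case/andP => /andP[/eqP hl1' /eqP hb] /eqP hn; subst.
  rewrite (g_single hid); last by apply/andP; split.
  rewrite hX; last by apply/andP; split.
  move: hnm hln; case: i => [|i] hnm hln //=.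
  by rewrite /decr_head /= (g_single hid) //; apply/andP; split => //; lia.
case/andP => hB /eqP hi; rewrite nthR0 in hi.
have hs := inB_size hB.
have l0 : (0 < l)%N by lia.
pose p0 : 'I_l := Ordinal l0.
have Gn := genS_Phi (hid n l (introT andP (conj hl1 hln)) hnm).
pose Psi := if (l <= n.-1)%N then Phi n.-1 l g else 0.
have GPsi : genS m n.-1 l = Psi \mPo Sl _ l.
  rewrite /Psi; case: ifP => h.
    by apply: genS_Phi; apply: hid; [apply/andP; split | lia].
  by rewrite genS_zero ?raddf0 //; lia.
have key : Phi n l (fun s => d (g s)) = 'X_p0 * Psi.
  apply: (@msym_fundamental_un l {mpoly algC[m]}).
  rewrite -(Dm_Phi n l hD hM hC d0 g) -Gn (Dm_genS l hD hM hC hX _ hnm); last lia.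
  have -> : ('X_p0 * Psi) \mPo Sl {mpoly algC[m]} l = ('X_p0 \mPo Sl _ l) * (Psi \mPo Sl _ l).
    exact: (rmorphM (comp_mpoly (Sl {mpoly algC[m]} l))).
  rewrite -GPsi comp_mpolyXU; congr (_ * _).
  by rewrite -tnth_nth tnth_mktuple.
have [t0 ht0] := tuple_of_seq hs (fun j => inB_le j hB).
have := congr1 (mcoeff (mnm_of l beta)) key.
rewrite -{1}ht0 Phi_coeff ?ht0 //.
rewrite (coeffXM p0 Psi) mnmE /= hi => ->.
case: (posnP i) => hi0 //.

have hb0 : (0 < nth 0%N beta 0%N)%N by rewrite hi.
have [hl' hBd] := decr_props hl hB hb0.
rewrite /Psi hl' mnm_decr //.
have [t1 ht1] := tuple_of_seq (inB_size hBd) (fun j => inB_le j hBd).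
by rewrite -ht1 Phi_coeff ?ht1.
Qed.
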